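(* If $f:S\to T$ and $g:T\to U$ are non-degenerate nested tuple morphisms, then $L_{g\circ f}=L_g\circ L_f$.
   Context: A nested tuple (of positive integers) is either a positive integer (depth $0$) or a finite tuple $(X_1,\dots,X_r)$ of nested tuples (depth $>0$, rank $r$, modes $X_i$). Its flattening $X^\flat$ is the tuple of integer leaves read left to right; $\mathrm{len}(X)$ is its length, $\mathrm{entry}_i(X)$ its $i$-th entry, $\mathrm{size}(X)$ the product of its entries. Congruent nested tuples have the same nesting pattern. $\langle n\rangle_*=\{*,1,\dots,n\}$. A layout is $L=S:D$ with $S,D$ congruent nested tuples ($S$ positive, $D$ nonnegative); $L^\flat=S^\flat:D^\flat$. For a flat layout $(s_1,\dots,s_m):(d_1,\dots,d_m)$ its layout function $\Phi:[0,\prod s_i)\to\mathbb{Z}$ is $\Phi(x)=\sum_i x_id_i$ with $x_i=\lfloor x/(s_1\cdots s_{i-1})\rfloor \bmod s_i$; for a layout, $\Phi_L=\Phi_{L^\flat}$ and $\mathrm{size}(L)=\mathrm{size}(S)$. A flat layout is coalesced if no $s_i=1$ and $s_id_i\ne d_{i+1}$ for $1\le i<m$. A layout $L$ is coalesced if $L=1:0$, or $L$ has depth $0$ with shape $>1$, or $L$ has depth $1$, rank $>1$ and is a coalesced flat layout. A nested tuple $X'$ refines $X$ if either $X$ is an integer equal to $\mathrm{size}(X')$, or both have depth $>0$, the same rank, and each mode of $X'$ refines the corresponding mode of $X$. If $S'$ refines $S$ then $S'$ is obtained from $S$ by replacing its $i$-th leaf by a nested tuple $S'_i$ of size $\mathrm{entry}_i(S)$;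 for a layout $L=S':D$ its $i$-th relative mode is $S'_i:D_i$ with $D_i$ the corresponding part of $D$. $L$ is coalesced over $S$ if every relative mode is coalesced. For layouts $A,B$, the composite $B\circ A$ is the unique layout $C$ such that $\mathrm{shape}(C)$ refines $\mathrm{shape}(A)$, $C$ is coalesced over $\mathrm{shape}(A)$, the image of $\Phi_A$ lies in $[0,\mathrm{size}(B))$, and $\Phi_C=\Phi_B\circ\Phi_A$. A nested tuple morphism $f:S\to T$ is given by a pointed map $\alpha:\langle\mathrm{len}(S)\rangle_*\to\langle\mathrm{len}(T)\rangle_*$ with each $j\ne*$ having at most one preimage and $\mathrm{entry}_i(S)=\mathrm{entry}_{\alpha(i)}(T)$ whenever $\alpha(i)\ne*$. Composition of $f$ (over $\alpha$) and $g$ (over $\beta$) lies over $\beta\circ\alpha$. With $T^\flat=(t_1,\dots,t_n)$, $L_f$ has shape $S$ and stride congruent to $S$ with $i$-th flattened entry $0$ if $\alpha(i)=*$, else $\prod_{j<\alpha(i)}t_j$. $f$ is non-degenerate if $\mathrm{entry}_i(S)=1$ implies $\alpha(i)=*$. *)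

(* Defs.v *)
From mathcomp Require Import all_boot.
Set Implicit Arguments. Unset Strict Implicit. Unset Printing Implicit Defensive.

(* Nested tuples: a leaf (depth 0) carrying a natural number, or a finite tuple
   of nested tuples.  Positivity of entries is imposed by the predicate
   [nt_pos] where needed. *)
Inductive ntuple : Type :=
| NLeaf of nat
| NNode of seq ntuple.

Fixpoint flat (X : ntuple) : seq nat :=
  match X with
  | NLeaf n => [:: n]
  | NNode l => flatten (map flat l)
  end.

Definition len (X : ntuple) : nat := size (flat X).
(* entry_i(X), 0-indexed: [entry i X] is the paper's entry_{i+1}(X). *)
Definition entry (i : nat) (X : ntuple) : nat := nth 0 (flat X) i.
Definition ntsize (X : ntuple) : nat := \prod_(x <- flat X) x.

Definition nt_pos (X : ntuple) : bool := all (fun n => 0 < n) (flat X).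

Fixpoint pattern (X : ntuple) : ntuple :=
  match X with
  | NLeaf _ => NLeaf 0
  | NNode l => NNode (map pattern l)
  end.

Definition congruent (X Y : ntuple) : Prop := pattern X = pattern Y.

Fixpoint refines (X' X : ntuple) {struct X} : Prop :=
  match X with
  | NLeaf n => ntsize X' = n
  | NNode l =>
      match X' with
      | NLeaf _ => False
      | NNode l' =>
          (fix go (l l' : seq ntuple) {struct l} : Prop :=
             match l, l' with
             | [::], [::] => True
             | a :: r, a' :: r' => refines a' a /\ go r r'
             | _, _ => False
             end) l l'
      end
  end.

(* If X' refines S, [rel_modes S X'] is the list (S'_1, ..., S'_n) of the
   nested tuples replacing the leaves of S (also used for a stride D
   congruent to X'). *)
Fixpoint rel_modes (S X : ntuple) {struct S} : seq ntuple :=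
  match S with
  | NLeaf _ => [:: X]
  | NNode l =>
      match X with
      | NLeaf _ => [::]
      | NNode l' =>
          (fix go (l l' : seq ntuple) {struct l} : seq ntuple :=
             match l, l' with
             | a :: r, a' :: r' => rel_modes a a' ++ go r r'
             | _, _ => [::]
             end) l l'
      end
  end.

Fixpoint fill (X : ntuple) (s : seq nat) : ntuple * seq nat :=
  match X with
  | NLeaf _ => (NLeaf (head 0 s), behead s)
  | NNode l =>
      let: (l', r) :=
        (fix go (l : seq ntuple) (s : seq nat) : seq ntuple * seq nat :=
           match l with
           | [::] => ([::], s)
           | a :: l1 =>
               let: (a', s1) := fill a s in
               let: (l2, s2) := go l1 s1 in (a' :: l2, s2)
           end) l s
      in (NNode l', r)
  end.

Definition layout := (ntuple * ntuple)%type.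
Definition shape (L : layout) : ntuple := L.1.
Definition stride (L : layout) : ntuple := L.2.

Definition is_layout (L : layout) : Prop :=
  congruent (shape L) (stride L) /\ nt_pos (shape L).

Definition lsize (L : layout) : nat := ntsize (shape L).

(* Layout function of a flat layout (s_1..s_m):(d_1..d_m), 0-indexed. *)
Definition flat_fun (s d : seq nat) (x : nat) : nat :=
  \sum_(i < size s) ((x %/ \prod_(j < i) nth 1 s j) %% nth 1 s i) * nth 0 d i.

Definition Phi (L : layout) : nat -> nat := flat_fun (flat (shape L)) (flat (stride L)).

Definition coalesced_flat (s d : seq nat) : bool :=
  all (fun n => n != 1) s &&
  all (fun i => nth 0 s i * nth 0 d i != nth 0 d i.+1) (iota 0 (size s).-1).

Definition is_leaf (X : ntuple) : bool :=
  if X is NLeaf _ then true else false.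

Definition coalesced (L : layout) : Prop :=
  (shape L = NLeaf 1 /\ stride L = NLeaf 0)
  \/ (exists n, shape L = NLeaf n /\ 1 < n)
  \/ (exists l, shape L = NNode l /\ all is_leaf l /\ 1 < size l
               /\ coalesced_flat (flat (shape L)) (flat (stride L))).

Definition coalesced_over (L : layout) (S : ntuple) : Prop :=
  forall i, i < len S ->
    coalesced (nth (NLeaf 0) (rel_modes S (shape L)) i,
               nth (NLeaf 0) (rel_modes S (stride L)) i).

(* [is_composite B A C] : C is the composite B o A, i.e. C is a layout
   satisfying the characterizing properties of the composite (which is
   defined in the paper as the unique such layout). *)
Definition is_composite (B A C : layout) : Prop :=
  [/\ is_layout C,
      refines (shape C) (shape A),
      coalesced_over C (shape A),
      (forall x, x < lsize A -> Phi A x < lsize B)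
    & (forall x, x < lsize A -> Phi C x = Phi B (Phi A x))].

(* Nested tuple morphisms f : S -> T over alpha : <len S>_pt -> <len T>_pt;
   the pointed sets are modeled as option 'I_n with None standing for the base point, 0-indexed. *)
Definition nt_morphism (S T : ntuple) (a : 'I_(len S) -> option 'I_(len T)) : Prop :=
  (forall i i' j, a i = Some j -> a i' = Some j -> i = i')
  /\ (forall i j, a i = Some j -> entry i S = entry j T).

Definition non_degenerate (S T : ntuple) (a : 'I_(len S) -> option 'I_(len T)) : Prop :=
  forall i : 'I_(len S), entry i S = 1 -> a i = None.

Definition mcomp (S T U : ntuple) (a : 'I_(len S) -> option 'I_(len T))
  (b : 'I_(len T) -> option 'I_(len U)) : 'I_(len S) -> option 'I_(len U) :=
  fun i => obind b (a i).

Definition morph_stride_entry (S T : ntuple) (a : 'I_(len S) -> option 'I_(len T))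
  (i : 'I_(len S)) : nat :=
  match a i with
  | None => 0
  | Some j => \prod_(k < j) nth 1 (flat T) k
  end.

Definition Lmorph (S T : ntuple) (a : 'I_(len S) -> option 'I_(len T)) : layout :=
  (S, (fill S [seq morph_stride_entry a i | i <- enum 'I_(len S)]).1).

(* Main.v *)
Require Import Defs.
From mathcomp Require Import all_boot.
From Stdlib Require List.
Set Implicit Arguments. Unset Strict Implicit. Unset Printing Implicit Defensive.

Definition ntuple_ind2 (P : ntuple -> Prop) (HL : forall n, P (NLeaf n))
  (HN : forall l, List.Forall P l -> P (NNode l)) : forall X, P X :=
  fix F X := match X return P X with
  | NLeaf n => HL n
  | NNode l => HN l ((fix G (l : seq ntuple) : List.Forall P l :=
       match l with
       | [::] => List.Forall_nil P
       | y :: r => @List.Forall_cons _ P y r (F y) (G r)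
       end) l)
  end.

Fixpoint fill_list (l : seq ntuple) (s : seq nat) : seq ntuple * seq nat :=
  match l with
  | [::] => ([::], s)
  | a :: l1 =>
      let: (a', s1) := fill a s in
      let: (l2, s2) := fill_list l1 s1 in (a' :: l2, s2)
  end.

Lemma fill_node l s : fill (NNode l) s = let: (l', r) := fill_list l s in (NNode l', r).
Proof. reflexivity. Qed.

Lemma len_node l : len (NNode l) = sumn (map len l).
Proof. by rewrite /len /= size_flatten /shape -map_comp. Qed.

Lemma mkseq_cat (f : nat -> nat) a b :
  mkseq f (a + b) = mkseq f a ++ mkseq (fun i => f (a + i)) b.
Proof. rewrite /mkseq iotaD map_cat; congr (_ ++ _).
by rewrite add0n -[in iota a b](addn0 a) iotaDl -map_comp. Qed.

Lemma fill_spec X : forall s,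
  flat (fill X s).1 = mkseq (nth 0 s) (len X) /\ (fill X s).2 = drop (len X) s.
Proof.
elim/ntuple_ind2: X => [n|l Hl] s.
  by case: s => [|x s]; split => //=; rewrite drop0.
rewrite fill_node len_node.
suff : flatten (map flat (fill_list l s).1) = mkseq (nth 0 s) (sumn (map len l))
   /\ (fill_list l s).2 = drop (sumn (map len l)) s.
  by case: (fill_list l s).
elim: Hl s => [|y r Hy Hr IH] s /=; first by rewrite drop0.
case: (Hy s); case: (fill y s) => y' s1 /= E1 E2.
case: (IH s1); case: (fill_list r s1) => l2 s2 /= E3 E4.
rewrite E1 E3 E4 E2 drop_drop mkseq_cat; split; last by rewrite addnC.
congr (_ ++ _); apply: eq_mkseq => i; by rewrite nth_drop.
Qed.

Lemma fill_pattern X : forall s, pattern (fill X s).1 = pattern X.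
Proof.
elim/ntuple_ind2: X => [n|l Hl] s //.
rewrite fill_node /=.
suff : map pattern (fill_list l s).1 = map pattern l.
  by case: (fill_list l s) => l' r /= ->.
elim: Hl s => [|y r Hy Hr IH] s //=.
have := Hy s; case: (fill y s) => y' s1 /= E1.
have := IH s1; case: (fill_list r s1) => l2 s2 /= E3.
by rewrite E1 E3.
Qed.

Lemma rel_modes_cong S : forall X, pattern S = pattern X -> rel_modes S X = map NLeaf (flat X).
Proof.
elim/ntuple_ind2: S => [n|l Hl] X.
  by case: X.
case: X => [m|l'] //= [E].
elim: Hl l' E => [|y r Hy Hr IH] [|y' r'] //= [E1 E2].
by rewrite Hy // IH // map_cat.
Qed.

Lemma refines_refl S : refines S S.
Proof.
elim/ntuple_ind2: S => [n|l Hl] /=.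
  by rewrite /ntsize /= big_seq1.
by elim: Hl => [|y r Hy Hr IH] //=.
Qed.

Definition Pn (t : seq nat) (j : nat) := \prod_(k < j) nth 1 t k.
Definition posl (t : seq nat) := all (fun n => 0 < n) t.

Lemma nth1_pos t k : posl t -> 0 < nth 1 t k.
Proof.
move=> Ht; case: (ltnP k (size t)) => Hk; last by rewrite nth_default.
exact: (allP Ht _ (mem_nth 1 Hk)).
Qed.

Lemma Pn_pos t j : posl t -> 0 < Pn t j.
Proof. move=> Ht; apply: prodn_gt0 => i; exact: nth1_pos. Qed.

Lemma PnS t j : Pn t j.+1 = Pn t j * nth 1 t j.
Proof. by rewrite /Pn big_ord_recr. Qed.

Lemma Pn_dvd t j k : j <= k -> Pn t j %| Pn t k.
Proof.
elim: k => [|k IH]; first by rewrite leqn0 => /eqP ->.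
rewrite leq_eqVlt => /orP [/eqP -> //| Hj].
rewrite PnS; apply: dvdn_mulr; exact: IH.
Qed.

Lemma mixed_lt t (c : nat -> nat) n : posl t -> (forall k, k < n -> c k < nth 1 t k) ->
  \sum_(0 <= k < n) c k * Pn t k < Pn t n.
Proof.
move=> Ht; elim: n => [|n IH] H.
  by rewrite big_geq // Pn_pos.
rewrite big_nat_recr //= PnS.
have H1 := IH (fun k Hk => H k (ltnW Hk)).
have H2 : c n < nth 1 t n by apply: H.
set A := \sum_(0 <= k < n) _ in H1 *.
set P := Pn t n in H1 *. set tn := nth 1 t n in H2 *.
apply: (@leq_trans (P + c n * P)); first by rewrite ltn_add2r.
by rewrite -mulSn mulnC leq_mul2l H2 orbT.
Qed.

Lemma digit_mixed t (c : nat -> nat) m j : posl t -> (forall k, k < m -> c k < nth 1 t k) ->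
  j < m -> (\sum_(0 <= k < m) c k * Pn t k) %/ Pn t j %% nth 1 t j = c j.
Proof.
move=> Ht H Hj.
rewrite (big_cat_nat _ (n := j.+1)) //= big_nat_recr //=.
set A := \sum_(0 <= k < j) _. set R := \sum_(j.+1 <= k < m) _.
have HA : A < Pn t j by apply: mixed_lt => // k Hk; apply: H; apply: ltn_trans Hj.
have HR : Pn t j.+1 %| R.
  rewrite /R big_seq_cond; apply: dvdn_sum => k /andP [Hk _]; apply: dvdn_mull; apply: Pn_dvd.
  by move: Hk; rewrite mem_index_iota => /andP [].
rewrite -(divnK HR) PnS.
set Q := R %/ _.
have -> : A + c j * Pn t j + Q * (Pn t j * nth 1 t j) = (c j + Q * nth 1 t j) * Pn t j + A.
  by rewrite mulnDl -mulnA (mulnC (nth 1 t j)) -addnA addnC.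
rewrite divnMDl ?Pn_pos // divn_small // addn0 addnC modnMDl modn_small //.
exact: H.
Qed.

Lemma reindex n m (a : 'I_n -> option 'I_m) (dig : 'I_n -> nat) (w : 'I_m -> nat) :
  \sum_(i < n) dig i * (match a i with None => 0 | Some j => w j end)
  = \sum_(j < m) (\sum_(i < n | a i == Some j) dig i) * w j.
Proof.
under [RHS]eq_bigr do rewrite big_distrl /= big_mkcond.
rewrite exchange_big /=; apply: eq_bigr => i _.
case E: (a i) => [j0|].
  rewrite (bigD1 j0) //= eqxx big1 ?addn0 // => j Hj.
  by case: eqP => // -[] E'; rewrite E' eqxx in Hj.
by rewrite muln0 big1.
Qed.

Lemma flat_stride S T (a : 'I_(len S) -> option 'I_(len T)) :
  flat (stride (Lmorph a)) = [seq morph_stride_entry a i | i <- enum 'I_(len S)].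
Proof.
rewrite /stride /Lmorph /=.
have [-> _] := fill_spec S [seq morph_stride_entry a i | i <- enum 'I_(len S)].
set d := [seq _ | _ <- _].
have Hd : size d = len S by rewrite size_map size_enum_ord.
by rewrite -{1}Hd mkseq_nth.
Qed.

Definition digS S x (i : 'I_(len S)) := x %/ Pn (flat S) i %% nth 1 (flat S) i.
Arguments digS : clear implicits.

Lemma Phi_Lmorph S T (a : 'I_(len S) -> option 'I_(len T)) x :
  Phi (Lmorph a) x = \sum_(i < len S) digS S x i *
     (match a i with None => 0 | Some j => Pn (flat T) j end).
Proof.
rewrite /Phi flat_stride /flat_fun /=; apply: eq_bigr => i _.
by rewrite (nth_map i) ?size_enum_ord // nth_ord_enum.
Qed.

Definition cf S T (a : 'I_(len S) -> option 'I_(len T)) x (j : 'I_(len T)) :=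
  \sum_(i < len S | a i == Some j) digS S x i.
Definition cnf S T (a : 'I_(len S) -> option 'I_(len T)) x k :=
  if (insub k : option 'I_(len T)) is Some j then cf a x j else 0.

Lemma cf_lt S T (a : 'I_(len S) -> option 'I_(len T)) x j :
  nt_pos S -> nt_pos T -> nt_morphism a -> cf a x j < nth 1 (flat T) j.
Proof.
move=> HS HT [Ainj Aent]; rewrite /cf.
case: (pickP (fun i => a i == Some j)) => [i0 Hi0|Hn]; last first.
  by rewrite big1 ?nth1_pos // => i; rewrite Hn.
rewrite (bigD1 i0) //= big1 ?addn0; last first.
  move=> i /andP [/eqP Hi Hne]; have E := Ainj _ _ _ Hi (eqP Hi0).
  by rewrite E eqxx in Hne.
have -> : nth 1 (flat T) j = nth 1 (flat S) i0.
  rewrite (set_nth_default 0) // (set_nth_default 0 1 (ltn_ord i0)).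
  by have := Aent _ _ (eqP Hi0); rewrite /entry => ->.
by rewrite /digS ltn_mod nth1_pos.
Qed.

Lemma key S T (a : 'I_(len S) -> option 'I_(len T)) x :
  Phi (Lmorph a) x = \sum_(0 <= k < len T) cnf a x k * Pn (flat T) k.
Proof.
rewrite Phi_Lmorph (reindex a (digS S x) (fun j => Pn (flat T) j)) big_mkord.
by apply: eq_bigr => j _; rewrite /cnf valK.
Qed.

Lemma cnf_lt S T (a : 'I_(len S) -> option 'I_(len T)) x k :
  nt_pos S -> nt_pos T -> nt_morphism a -> k < len T -> cnf a x k < nth 1 (flat T) k.
Proof.
move=> HS HT Ha Hk.
have -> : k = val (Ordinal Hk) by [].
rewrite /cnf valK; exact: cf_lt.
Qed.

Theorem mainTheorem2 (S T U : ntuple)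
  (a : 'I_(len S) -> option 'I_(len T)) (b : 'I_(len T) -> option 'I_(len U)) :
  nt_pos S -> nt_pos T -> nt_pos U ->
  nt_morphism a -> nt_morphism b ->
  non_degenerate a -> non_degenerate b ->
  is_composite (Lmorph b) (Lmorph a) (Lmorph (mcomp a b)).
Proof.
move=> HS HT HU Ha Hb Andeg Bndeg.
split.
- split => //; rewrite /congruent /= fill_pattern //.
- exact: refines_refl.
- move=> i Hi /=.
  rewrite (@rel_modes_cong S S) // (@rel_modes_cong S (stride (Lmorph (mcomp a b)))); last first.
    by rewrite /= fill_pattern.
  rewrite flat_stride (nth_map 0) // (nth_map 0); last by rewrite size_map size_enum_ord.
  rewrite (nth_map (Ordinal Hi)) ?size_enum_ord //.
  have -> : nth (Ordinal Hi) (enum 'I_(len S)) i = Ordinal Hi.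
    exact: (nth_ord_enum (Ordinal Hi) (Ordinal Hi)).
  case E: (nth 0 (flat S) i == 1).
    left; split; first by rewrite (eqP E).
    by rewrite /= /morph_stride_entry /mcomp Andeg //= /entry (eqP E).
  right; left; exists (nth 0 (flat S) i); split => //.
  have H0 := allP HS _ (mem_nth 0 Hi); rewrite ltn_neqAle eq_sym E; exact: H0.
- move=> x Hx; rewrite key /lsize /= /ntsize [X in _ < X](big_nth 1) [X in _ < X]big_mkord.
  have -> : (\prod_(i < size (flat T)) nth 1 (flat T) i) = Pn (flat T) (len T) by [].
  apply: mixed_lt => // k Hk; exact: cnf_lt.
- move=> x Hx.
  rewrite [Phi (Lmorph b) _]Phi_Lmorph Phi_Lmorph key.
  have Hd : forall j : 'I_(len T),
      digS T (\sum_(0 <= k < len T) cnf a x k * Pn (flat T) k) j = cf a x j.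
    move=> j; rewrite /digS (digit_mixed (c := cnf a x)) //.
    - by rewrite /cnf valK.
    - by move=> k Hk; apply: cnf_lt.
  under [RHS]eq_bigr => j _ do rewrite Hd.
  rewrite -(reindex a (digS S x) (fun j => match b j with None => 0 | Some k => Pn (flat U) k end)).
  apply: eq_bigr => i _; rewrite /mcomp; by case: (a i).
Qed.
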